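(* Let $M\in\mathcal{F}$. Then there exist positive integers $n_1,\dots,n_k$ such that $M$ is the range of the cardinal function of the finite sequence $(n_1,\dots,n_k)$.
   Context: For a finite sequence $\mathbf{x}=(x_1,\dots,x_N)$ of positive reals, its achievement set is $\mathcal{A}(\mathbf{x})=\{\sum_{n\in A}x_n: A\subseteq\{1,\dots,N\}\}$ and its cardinal function $f_{\mathbf{x}}:\mathcal{A}(\mathbf{x})\to\mathbb{N}$ sends $x$ to the number of subsets $A\subseteq\{1,\dots,N\}$ with $\sum_{n\in A}x_n=x$ (terms with equal values at different positions are distinguished). $\mathcal{F}$ is the family of ranges of cardinal functions of finite sequences of positive reals. *)

(* Defs.v *)
From Stdlib Require Import Reals List.
Import ListNotations.
Open Scope R_scope.

(* All subsets of {1,...,N}, encoded as bit-masks (lists of booleans of length N);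
   position i of the mask says whether index i+1 belongs to the subset. *)
Fixpoint masks (N : nat) : list (list bool) :=
  match N with
  | O => [[]]
  | S n => map (cons true) (masks n) ++ map (cons false) (masks n)
  end.

Fixpoint subset_sum (x : list R) (m : list bool) : R :=
  match x, m with
  | a :: x', b :: m' => (if b then a else 0) + subset_sum x' m'
  | _, _ => 0
  end.

Definition achievement_set (x : list R) (s : R) : Prop :=
  exists m, In m (masks (length x)) /\ subset_sum x m = s.

Definition cardinal_function (x : list R) (s : R) : nat :=
  length (filter (fun m => if Req_EM_T (subset_sum x m) s then true else false)
                 (masks (length x))).

Definition cardinal_range (x : list R) (k : nat) : Prop :=
  exists s, achievement_set x s /\ cardinal_function x s = k.

Definition positive_seq (x : list R) : Prop := Forall (fun a => 0 < a) x.

Definition in_family_F (M : nat -> Prop) : Prop :=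
  exists x, positive_seq x /\ forall k, M k <-> cardinal_range x k.

(* Main.v *)
Require Import Defs.
From Stdlib Require Import Reals List.
From Stdlib Require Import ZArith Lra Lia.
Import ListNotations.
Open Scope R_scope.

Fixpoint dot (c : list Z) (x : list R) : R :=
  match c, x with
  | a :: c', u :: x' => IZR a * u + dot c' x'
  | _, _ => 0
  end.

Fixpoint dotZ (c : list Z) (x : list Z) : Z :=
  match c, x with
  | a :: c', u :: x' => (a * u + dotZ c' x')%Z
  | _, _ => 0%Z
  end.

Fixpoint zadd (l1 l2 : list Z) : list Z :=
  match l1 with
  | [] => l2
  | u :: l1' => match l2 with [] => l1 | v :: l2' => (u + v)%Z :: zadd l1' l2' end
  end.

Definition lc (a b : Z) (d c : list Z) : list Z :=
  zadd (map (Z.mul a) d) (map (fun v => (- (b * v))%Z) c).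

Fixpoint abssum (c : list Z) : R :=
  match c with [] => 0 | a :: c' => Rabs (IZR a) + abssum c' end.

Lemma dot_nil c : dot c [] = 0.
Proof. destruct c; reflexivity. Qed.

Lemma zadd_dot : forall l1 l2 x, dot (zadd l1 l2) x = dot l1 x + dot l2 x.
Proof.
  induction l1 as [|u l1 IH]; intros l2 x; simpl. ring.
  destruct l2 as [|v l2]; destruct x as [|w x]; simpl; try ring.
  rewrite IH, plus_IZR. ring.
Qed.

Lemma map_dot f k (Hf : forall v, IZR (f v) = k * IZR v) :
  forall d x, dot (map f d) x = k * dot d x.
Proof.
  induction d as [|u d IH]; intros x; destruct x; simpl; try ring.
  rewrite IH, Hf. ring.
Qed.

Lemma lc_dot a b d c x : dot (lc a b d c) x = IZR a * dot d x - IZR b * dot c x.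
Proof.
  unfold lc. rewrite zadd_dot.
  rewrite (map_dot (Z.mul a) (IZR a)) by (intros; apply mult_IZR).
  rewrite (map_dot _ (- IZR b)) by (intros; rewrite opp_IZR, mult_IZR; ring).
  ring.
Qed.

Lemma abssum_nonneg c : 0 <= abssum c.
Proof. induction c; simpl. lra. pose proof (Rabs_pos (IZR a)). lra. Qed.

Lemma dot_close d c : 0 <= d -> forall y x, Forall2 (fun u v => Rabs (u - v) <= d) y x ->
  Rabs (dot c y - dot c x) <= abssum c * d.
Proof.
  intro Hd.
  induction c as [|a c IH]; intros y x H; simpl.
  - rewrite Rminus_diag, Rabs_R0. lra.
  - pose proof (abssum_nonneg c). pose proof (Rabs_pos (IZR a)).
    destruct H as [|u v y x Huv H]; simpl.
    + rewrite Rminus_diag, Rabs_R0. nra.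
    + specialize (IH _ _ H).
      replace (IZR a * u + dot c y - (IZR a * v + dot c x)) with
        (IZR a * (u - v) + (dot c y - dot c x)) by ring.
      eapply Rle_trans. apply Rabs_triang. rewrite Rabs_mult.
      pose proof (Rabs_pos (u - v)).
      assert (Rabs (IZR a) * Rabs (u - v) <= Rabs (IZR a) * d) by (apply Rmult_le_compat_l; lra).
      lra.
Qed.

Lemma dot_int D : forall c y zs, Forall2 (fun u z => u * IZR D = IZR z) y zs ->
  dot c y * IZR D = IZR (dotZ c zs).
Proof.
  induction c as [|a c IH]; intros y zs H; destruct H as [|u z y zs Huz H]; simpl; try ring.
  rewrite plus_IZR, mult_IZR, <- (IH _ _ H), <- Huz. ring.
Qed.

Lemma density x eps : 0 < eps -> exists z K, (0 < K)%Z /\ Rabs (IZR z / IZR K - x) <= eps.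
Proof.
  intro He.
  destruct (archimed (/ eps)) as [H1 H2].
  pose proof (Rinv_0_lt_compat _ He).
  set (K := up (/ eps)) in *.
  assert (HK : (0 < K)%Z) by (apply lt_0_IZR; lra).
  assert (HKR : 0 < IZR K) by (apply IZR_lt; lia).
  destruct (archimed (x * IZR K)) as [H3 H4].
  exists (up (x * IZR K)), K. split; auto.
  set (z := up (x * IZR K)) in *.
  replace (IZR z / IZR K - x) with ((IZR z - x * IZR K) / IZR K) by (field; lra).
  rewrite Rabs_right.
  - apply (Rmult_le_reg_r (IZR K)); auto.
    unfold Rdiv. rewrite Rmult_assoc, Rinv_l by lra.
    assert (eps * IZR K >= 1).
    { apply Rle_ge. replace 1 with (eps * / eps) by (field; lra).
      apply Rmult_le_compat_l; lra. }
    lra.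
  - apply Rle_ge. unfold Rdiv. apply Rmult_le_pos; [lra|]. left. apply Rinv_0_lt_compat. lra.
Qed.

Lemma Forall2_map_r {A B C} (P : A -> C -> Prop) (f : B -> C) (Q : A -> B -> Prop) :
  (forall a b, Q a b -> P a (f b)) -> forall l1 l2, Forall2 Q l1 l2 -> Forall2 P l1 (map f l2).
Proof. intros H l1 l2 HF. induction HF; simpl; constructor; auto. Qed.

Lemma approx : forall (x : list R) (eqs : list (list Z)),
  Forall (fun c => dot c x = 0) eqs -> forall eps, 0 < eps ->
  exists y D zs, (0 < D)%Z /\ Forall2 (fun u v => Rabs (u - v) <= eps) y x /\
    Forall2 (fun u z => u * IZR D = IZR z) y zs /\ Forall (fun c => dot c y = 0) eqs.
Proof.
  induction x as [|x1 x IH]; intros eqs Heqs eps He.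
  - exists [], 1%Z, []. split; [lia|]. split; [constructor|]. split; [constructor|].
    rewrite Forall_forall in *. intros c Hc. apply dot_nil.
  - destruct (find (fun c => match c with a :: _ => negb (Z.eqb a 0) | [] => false end) eqs)
      as [p|] eqn:Hf.
    + apply find_some in Hf as [Hp Hpa].
      destruct p as [|a c']; [discriminate|].
      assert (Ha : a <> 0%Z) by (intro; subst; discriminate).
      assert (HaR : IZR a <> 0) by (apply not_0_IZR; auto).
      assert (Hpx : IZR a * x1 + dot c' x = 0).
      { rewrite Forall_forall in Heqs. apply (Heqs _ Hp). }
      set (eqs' := map (fun e => match e with b :: d => lc a b d c' | [] => [] end) eqs).
      assert (Heqs' : Forall (fun c => dot c x = 0) eqs').
      { unfold eqs'. rewrite Forall_map. rewrite Forall_forall in *.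
        intros [|b d] He'; simpl. reflexivity.
        rewrite lc_dot. specialize (Heqs _ He'). simpl in Heqs.
        assert (E1 : dot d x = - IZR b * x1) by lra.
        assert (E2 : dot c' x = - IZR a * x1) by lra.
        rewrite E1, E2. ring. }
      pose proof (abssum_nonneg c').
      set (eps' := eps / (1 + abssum c')).
      assert (He' : 0 < eps') by (unfold eps'; apply Rdiv_lt_0_compat; lra).
      destruct (IH _ Heqs' eps' He') as (y & D & zs & HD & Hc & Hz & Hy).
      set (y1 := - dot c' y / IZR a).
      exists (y1 :: y), (D * a * a)%Z, ((- dotZ c' zs * a) :: map (fun z => z * (a * a)) zs)%Z.
      assert (Haa : (0 < a * a)%Z) by (destruct (Z.lt_trichotomy a 0) as [Hq|[Hq|Hq]]; [nia|lia|nia]).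
      split; [rewrite <- Z.mul_assoc; apply Z.mul_pos_pos; auto|]. split; [|split].
      * constructor.
        -- assert (Hx1 : x1 = - dot c' x / IZR a) .
           { apply (Rmult_eq_reg_l (IZR a)); auto. unfold Rdiv.
             replace (IZR a * (- dot c' x * / IZR a)) with (- dot c' x) by (field; auto). lra. }
           unfold y1. rewrite Hx1.
           replace (- dot c' y / IZR a - - dot c' x / IZR a) with
             ((dot c' x - dot c' y) / IZR a) by (unfold Rdiv; ring).
           unfold Rdiv. rewrite Rabs_mult, Rabs_inv, Rabs_minus_sym.
           assert (Hae : 1 <= Rabs (IZR a)).
           { rewrite <- abs_IZR. apply IZR_le. lia. }
           pose proof (dot_close eps' c' (Rlt_le _ _ He') _ _ Hc).
           assert (Hinv : 0 < / Rabs (IZR a) <= 1).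
           { split. apply Rinv_0_lt_compat; lra.
             rewrite <- Rinv_1. apply Rinv_le_contravar; lra. }
           assert (abssum c' * eps' <= eps).
           { unfold eps'. apply (Rmult_le_reg_r (1 + abssum c')). lra.
             unfold Rdiv. rewrite Rmult_assoc, (Rmult_assoc eps), Rinv_l by lra. nra. }
           pose proof (Rabs_pos (dot c' y - dot c' x)). nra.
        -- assert (eps' <= eps).
           { unfold eps'. apply (Rmult_le_reg_r (1 + abssum c')). lra.
             unfold Rdiv. rewrite Rmult_assoc, Rinv_l by lra. nra. }
           clear -Hc H0. induction Hc; constructor; auto. lra.
      * constructor.
        -- unfold y1. rewrite !mult_IZR, opp_IZR, <- (dot_int D c' y zs Hz). field. auto.
        -- apply Forall2_map_r with (Q := fun u z => u * IZR D = IZR z); auto.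
           intros u z Hq. rewrite !mult_IZR, <- Hq. ring.
      * rewrite Forall_forall in *. intros [|b d] He2; [reflexivity|].
        assert (Hl : In (lc a b d c') eqs') by (unfold eqs'; apply in_map_iff; exists (b :: d); auto).
        specialize (Hy _ Hl). rewrite lc_dot in Hy. simpl.
        assert (Hay : IZR a * y1 = - dot c' y) by (unfold y1; field; auto).
        apply (Rmult_eq_reg_l (IZR a)); auto.
        replace (IZR a * (IZR b * y1 + dot d y)) with (IZR b * (IZR a * y1) + IZR a * dot d y) by ring.
        rewrite Hay. lra.
    + assert (H0 : forall c, In c eqs -> forall u v, dot c (u :: v) = dot (tl c) v).
      { intros c Hc u v. pose proof (find_none _ _ Hf c Hc).
        destruct c as [|a c]; simpl. reflexivity.
        destruct (Z.eqb_spec a 0); [subst|discriminate]. simpl. ring. }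
      assert (Heqs' : Forall (fun c => dot c x = 0) (map (@tl Z) eqs)).
      { rewrite Forall_map, Forall_forall in *. intros c Hc. rewrite <- (H0 c Hc x1). auto. }
      destruct (IH _ Heqs' eps He) as (y & D & zs & HD & Hc & Hz & Hy).
      destruct (density x1 eps He) as (z & K & HK & Hzk).
      exists (IZR z / IZR K :: y), (D * K)%Z, ((z * D) :: map (fun w => w * K) zs)%Z.
      split; [nia|]. split; [|split].
      * constructor; auto.
      * constructor.
        -- rewrite !mult_IZR. field. apply not_0_IZR. lia.
        -- apply Forall2_map_r with (Q := fun u z => u * IZR D = IZR z); auto.
           intros u w Hq. rewrite !mult_IZR, <- Hq. ring.
      * rewrite Forall_map, Forall_forall in *. intros c Hc0. rewrite H0; auto.
Qed.

Lemma masks_len : forall n m, In m (masks n) -> length m = n.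
Proof.
  induction n; simpl; intros m H.
  - destruct H as [<-|[]]; reflexivity.
  - apply in_app_or in H as [H|H]; apply in_map_iff in H as [m' [<- H]]; simpl; f_equal; auto.
Qed.

Fixpoint cm (m m' : list bool) : list Z :=
  match m with
  | [] => []
  | b :: m1 => match m' with
               | [] => []
               | b' :: m1' => ((if b then 1 else 0) - (if b' then 1 else 0))%Z :: cm m1 m1'
               end
  end.

Lemma cm_dot : forall x m m', length m = length x -> length m' = length x ->
  dot (cm m m') x = subset_sum x m - subset_sum x m'.
Proof.
  induction x as [|u x IH]; intros [|b m] [|b' m'] H1 H2; simpl in *; try lia; try ring.
  rewrite IH by lia. rewrite minus_IZR. destruct b, b'; simpl; ring.
Qed.

Lemma ss_close d : 0 <= d -> forall y x, Forall2 (fun u v => Rabs (u - v) <= d) y x ->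
  forall m, Rabs (subset_sum y m - subset_sum x m) <= INR (length x) * d.
Proof.
  intros Hd y x H. induction H as [|u v y x Huv H IH]; intros m.
  - simpl. rewrite Rminus_diag, Rabs_R0. lra.
  - destruct m as [|b m]; cbn [subset_sum length].
    + rewrite Rminus_diag, Rabs_R0. apply Rmult_le_pos; [apply pos_INR|lra].
    + specialize (IH m).
      replace ((if b then u else 0) + subset_sum y m - ((if b then v else 0) + subset_sum x m))
        with (((if b then u else 0) - (if b then v else 0)) + (subset_sum y m - subset_sum x m)) by ring.
      eapply Rle_trans. apply Rabs_triang. rewrite S_INR.
      destruct b. lra. rewrite Rminus_diag, Rabs_R0. lra.
Qed.

Lemma ss_scale c : forall y m, subset_sum (map (fun u => u * c) y) m = subset_sum y m * c.
Proof.
  induction y as [|u y IH]; intros [|b m]; simpl; try ring. rewrite IH. destruct b; ring.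
Qed.

Lemma min_pos : forall l, Forall (fun r => 0 < r) l -> exists g, 0 < g /\ Forall (fun r => g <= r) l.
Proof.
  induction l as [|r l IH]; intros H.
  - exists 1. split; auto. lra.
  - inversion H; subst. destruct (IH H3) as [g [Hg Hl]].
    exists (Rmin r g). split. apply Rmin_pos; auto.
    constructor. apply Rmin_l.
    eapply Forall_impl; [|exact Hl]. intros a Ha. pose proof (Rmin_r r g). lra.
Qed.

Lemma range_dir x w : length x = length w ->
  (forall m m', In m (masks (length x)) -> In m' (masks (length x)) ->
     (subset_sum x m = subset_sum x m' <-> subset_sum w m = subset_sum w m')) ->
  forall k, cardinal_range x k -> cardinal_range w k.
Proof.
  intros Hl Heq k [s [[m [Hm Hs]] Hk]]. subst s.
  exists (subset_sum w m). split. exists m. rewrite <- Hl. auto.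
  rewrite <- Hk. unfold cardinal_function. rewrite <- Hl. f_equal.
  apply filter_ext_in. intros m' Hm'.
  specialize (Heq m' m Hm' Hm).
  destruct (Req_EM_T (subset_sum x m') (subset_sum x m));
  destruct (Req_EM_T (subset_sum w m') (subset_sum w m)); tauto.
Qed.

Lemma range_transfer x w : length x = length w ->
  (forall m m', In m (masks (length x)) -> In m' (masks (length x)) ->
     (subset_sum x m = subset_sum x m' <-> subset_sum w m = subset_sum w m')) ->
  forall k, cardinal_range x k <-> cardinal_range w k.
Proof.
  intros Hl Heq k. split. apply range_dir; auto.
  apply range_dir; auto. rewrite <- Hl. intros m m' H1 H2. symmetry. auto.
Qed.

Lemma pos_y d g : forall y x, Forall2 (fun u v => Rabs (u - v) <= d) y x ->
  Forall (fun r => g <= r) x -> d < g -> Forall (fun r => 0 < r) y.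
Proof.
  intros y x H. induction H as [|u v y x Huv H IH]; intros Hx Hd; constructor.
  - inversion Hx; subst. pose proof (Rle_abs (v - u)). rewrite Rabs_minus_sym in Huv. lra.
  - inversion Hx; auto.
Qed.

Lemma ints D : forall y zs, Forall (fun r => 0 < r) y ->
  Forall2 (fun u z => u * IZR D = IZR z) y zs -> (0 < D)%Z ->
  map INR (map Z.to_nat zs) = map (fun u => u * IZR D) y /\
  Forall (fun n => (0 < n)%nat) (map Z.to_nat zs).
Proof.
  intros y zs Hy H HD. induction H as [|u z y zs Huz H IH]; simpl. auto.
  inversion Hy; subst. destruct (IH H3) as [E F].
  assert (0 < IZR D) by (apply IZR_lt; auto).
  assert (Hz : (0 < z)%Z) by (apply lt_0_IZR; rewrite <- Huz; nra).
  split. f_equal; auto. rewrite INR_IZR_INZ, Z2Nat.id by lia. auto.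
  constructor; auto. lia.
Qed.

Lemma absle t c : Rabs t <= c -> - c <= t <= c.
Proof. intro H. pose proof (Rle_abs t). pose proof (Rle_abs (- t)). rewrite Rabs_Ropp in *. lra. Qed.

Theorem theorem8p1 (M : nat -> Prop) :
  in_family_F M ->
  exists ns : list nat,
    Forall (fun n => (0 < n)%nat) ns /\
    forall k, M k <-> cardinal_range (map INR ns) k.
Proof.
  intros [x [Hpos HM]].
  set (N := length x).
  set (pairs := list_prod (masks N) (masks N)).
  set (eqb := fun p : list bool * list bool =>
        if Req_EM_T (subset_sum x (fst p)) (subset_sum x (snd p)) then true else false).
  set (eqs := map (fun p => cm (fst p) (snd p)) (filter eqb pairs)).
  assert (Heqs : Forall (fun c => dot c x = 0) eqs).
  { unfold eqs. rewrite Forall_map, Forall_forall. intros [m m'] Hp.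
    apply filter_In in Hp as [Hp He]. apply in_prod_iff in Hp as [H1 H2].
    apply masks_len in H1. apply masks_len in H2. simpl.
    rewrite cm_dot by auto. unfold eqb in He. simpl in He.
    destruct (Req_EM_T _ _); [lra|discriminate]. }
  set (G := x ++ map (fun p => Rabs (subset_sum x (fst p) - subset_sum x (snd p)))
                    (filter (fun p => negb (eqb p)) pairs)).
  assert (HG : Forall (fun r => 0 < r) G).
  { unfold G. apply Forall_app. split. exact Hpos.
    rewrite Forall_map, Forall_forall. intros [m m'] Hp.
    apply filter_In in Hp as [_ He]. unfold eqb in He. simpl in *.
    destruct (Req_EM_T _ _); [discriminate|]. apply Rabs_pos_lt. lra. }
  destruct (min_pos G HG) as [g [Hg HgG]].
  unfold G in HgG. apply Forall_app in HgG as [Hgx Hgp].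
  pose proof (pos_INR N) as HN.
  set (d := g / (2 * INR N + 2)).
  assert (Hd : 0 < d) by (unfold d; apply Rdiv_lt_0_compat; lra).
  assert (Hd2 : d * (2 * INR N + 2) = g) by (unfold d; field; intro; lra).
  destruct (approx x eqs Heqs d Hd) as (y & D & zs & HD & Hc & Hz & Hy).
  assert (Hyp : Forall (fun r => 0 < r) y) by (apply (pos_y d g y x); auto; nra).
  destruct (ints D y zs Hyp Hz HD) as [E F].
  exists (map Z.to_nat zs). split; auto.
  intros k. rewrite HM, E.
  assert (HlY : length y = N) by (apply Forall2_length in Hc; auto).
  apply range_transfer.
  { rewrite length_map. auto. }
  intros m m' Hm Hm'.
  rewrite !ss_scale.
  assert (HDR : IZR D <> 0) by (apply not_0_IZR; lia).
  assert (Hiff : subset_sum y m = subset_sum y m' <-> subset_sum y m * IZR D = subset_sum y m' * IZR D).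
  { split; intro H. rewrite H; auto. apply Rmult_eq_reg_r in H; auto. }
  rewrite <- Hiff. clear Hiff.
  pose proof (masks_len _ _ Hm) as L1. pose proof (masks_len _ _ Hm') as L2.
  fold N in L1, L2, Hm, Hm'.
  destruct (Req_EM_T (subset_sum x m) (subset_sum x m')) as [Heq|Hne].
  - split; intros _; auto.
    assert (Hin : In (cm m m') eqs).
    { unfold eqs. apply in_map_iff. exists (m, m'). split; auto.
      apply filter_In. split. apply in_prod; auto. unfold eqb. simpl.
      destruct (Req_EM_T _ _); auto. }
    rewrite Forall_forall in Hy. specialize (Hy _ Hin).
    rewrite cm_dot in Hy by lia. lra.
  - split; intros H; [contradiction|].
    exfalso.
    assert (Hin : In (m, m') (filter (fun p => negb (eqb p)) pairs)).
    { apply filter_In. split. apply in_prod; auto. unfold eqb. simpl.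
      destruct (Req_EM_T _ _); auto. }
    rewrite Forall_map, Forall_forall in Hgp. specialize (Hgp _ Hin). simpl in Hgp.
    pose proof (ss_close d (Rlt_le _ _ Hd) y x Hc m) as C1.
    pose proof (ss_close d (Rlt_le _ _ Hd) y x Hc m') as C2.
    fold N in C1, C2. rewrite H in C1.
    apply absle in C1. apply absle in C2.
    destruct (Rle_lt_dec 0 (subset_sum x m - subset_sum x m')).
    + rewrite Rabs_right in Hgp by lra. nra.
    + rewrite Rabs_left in Hgp by lra. nra.
Qed.
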